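(* Let $F$ be a Fano manifold and let $\lambda$ be an eigenvalue of $(c_1(F)\star_0)$ on $H^{(0)}$ of multiplicity one. Then $\lambda$ is not an eigenvalue of $(c_1(F)\star_0)$ on $H^{(j)}$ for any $j\neq0$.
   Context: $\star_0$ is the small quantum product on the full cohomology $H^\bullet(F,\mathbb C)$ (supercommutative, with Poincaré pairing $(\cdot,\cdot)$ satisfying the Frobenius property). $H^{(j)}=\bigoplus_{p-q=j}H^{p,q}(F)$; each $H^{(j)}$ is preserved by $(c_1(F)\star_0)$ and $H^{(j)}\star_0H^{(k)}\subset H^{(j+k)}$. *)

(* Defs.v *)
From HB Require Import structures.
From mathcomp Require Import all_boot all_order all_algebra.
Set Implicit Arguments. Unset Strict Implicit. Unset Printing Implicit Defensive.
Import Order.TTheory GRing.Theory Num.Theory.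
Local Open Scope ring_scope.

(* Abstract model of (H^*(F,C), star_0, Poincare pairing, Hodge-type grading
   H^(j) = (+)_{p-q=j} H^{p,q}, c_1(F)) for a Fano manifold F of complex
   dimension n.  Parity of cohomological degree p+q equals parity of j = p-q,
   so super-commutativity is expressed via j. *)
Record qcoh_axioms (K : numClosedFieldType) (H : vectType K)
    (mul : H -> H -> H) (one : H) (pair : H -> H -> K)
    (n : nat) (Hj : int -> {vspace H}) (c1 : H) : Prop := QCohAxioms {
  mul_linl : forall (k : K) (a b c : H), mul (k *: a + b) c = k *: mul a c + mul b c;
  mul_linr : forall (k : K) (a b c : H), mul a (k *: b + c) = k *: mul a b + mul a c;
  mulA : forall a b c, mul a (mul b c) = mul (mul a b) c;
  mul1l : forall a, mul one a = a;
  mul1r : forall a, mul a one = a;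
  Hj_sum : (\sum_(i < n.*2.+1) Hj (i%:Z - n%:Z))%VS = fullv;
  Hj_direct : directv (\sum_(i < n.*2.+1) Hj (i%:Z - n%:Z))%VS;
  Hj_out : forall j : int, (n%:Z < `|j|) -> Hj j = 0%VS;
  mul_graded : forall (j k : int) a b, a \in Hj j -> b \in Hj k -> mul a b \in Hj (j + k);
  mul_supercomm : forall (j k : int) a b, a \in Hj j -> b \in Hj k ->
      mul a b = (-1) ^+ (`|j|%N * `|k|%N) *: mul b a;
  one_H0 : one \in Hj 0;
  c1_H0 : c1 \in Hj 0;
  pair_linl : forall (k : K) (a b c : H), pair (k *: a + b) c = k * pair a c + pair b c;
  pair_linr : forall (k : K) (a b c : H), pair a (k *: b + c) = k * pair a b + pair a c;
  pair_nondeg : forall a, (forall b, pair a b = 0) -> a = 0;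
  pair_frob : forall a b c, pair (mul a b) c = pair a (mul b c);
  pair_graded : forall (j k : int) a b, a \in Hj j -> b \in Hj k -> j + k != 0 ->
      pair a b = 0
}.

(* v is a generalized eigenvector (or 0) of f for lam:  (f - lam)^N v = 0,
   with N = dim H (which suffices for the generalized eigenspace). *)
Definition gen_eig_vec (K : fieldType) (H : vectType K) (f : H -> H) (lam : K) (v : H) : Prop :=
  iter (\dim (fullv : {vspace H})) (fun x => f x - lam *: x) v = 0.

(* lam has (algebraic) multiplicity one as an eigenvalue of f restricted to U:
   the generalized lam-eigenspace of f in U is one-dimensional. *)
Definition mult_one_on (K : fieldType) (H : vectType K) (U : {vspace H}) (f : H -> H) (lam : K) : Prop :=
  exists e : H, [/\ e \in U, e != 0, gen_eig_vec f lam e &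
    forall v, v \in U -> gen_eig_vec f lam v -> exists k : K, v = k *: e].

Definition eigenvalue_on (K : fieldType) (H : vectType K) (U : {vspace H}) (f : H -> H) (lam : K) : Prop :=
  exists v : H, [/\ v \in U, v != 0 & f v = lam *: v].

(* Main.v *)
Require Import Defs.
From HB Require Import structures.
From mathcomp Require Import all_boot all_order all_algebra.
From mathcomp Require Import zify.
From Stdlib Require Import Classical.
Set Implicit Arguments. Unset Strict Implicit. Unset Printing Implicit Defensive.
Import Order.TTheory GRing.Theory Num.Theory.
Local Open Scope ring_scope.

Section Fit.
Lemma iter_lin (K : fieldType) (V : vectType K) (f : 'End(V)) k (x y : V) :
  iter k f (x - y) = iter k f x - iter k f y.
Proof. elim: k => //= k ->; by rewrite linearB. Qed.

Definition pw (K : fieldType) (V : vectType K) (f : 'End(V)) k : 'End(V) :=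
  iter k (fun g => f \o g)%VF \1%VF.

Lemma pwE (K : fieldType) (V : vectType K) (f : 'End(V)) k x : pw f k x = iter k f x.
Proof. elim: k => [|k IH] /=; first by rewrite id_lfunE. by rewrite comp_lfunE IH. Qed.

Lemma pw_img (K : fieldType) (V : vectType K) (f : 'End(V)) k :
  limg (pw f k.+1) = (f @: limg (pw f k))%VS.
Proof. by rewrite /= limg_comp. Qed.

Lemma pw_dec (K : fieldType) (V : vectType K) (f : 'End(V)) k :
  (limg (pw f k.+1) <= limg (pw f k))%VS.
Proof.
elim: k => [|k IH]; first by rewrite /= lim1g subvf.
by rewrite pw_img [X in (_ <= X)%VS]pw_img limgS.
Qed.

Lemma pw_stab (K : fieldType) (V : vectType K) (f : 'End(V)) k m :
  limg (pw f k.+1) = limg (pw f k) -> limg (pw f (m + k)) = limg (pw f k).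
Proof.
move=> Hk; elim: m => [|m IH] //.
by rewrite addSn pw_img IH -pw_img.
Qed.

Lemma pw_exists (K : fieldType) (V : vectType K) (f : 'End(V)) :
  exists2 k, (k <= \dim {:V})%N & limg (pw f k.+1) = limg (pw f k).
Proof.
set N := \dim {:V}.
case: (boolP [exists k : 'I_N.+1, limg (pw f k.+1) == limg (pw f k)]).
  by case/existsP => k /eqP Hk; exists k => //; rewrite -ltnS ltn_ord.
move/existsPn => H0.
have H : forall k, (k <= N)%N -> limg (pw f k.+1) != limg (pw f k).
  by move=> k kN; have := H0 (Ordinal (kN : (k < N.+1)%N)).
exfalso.
have D : forall k, (k <= N.+1)%N -> (\dim (limg (pw f k)) + k <= N)%N.
  elim=> [|k IH] kN; first by rewrite addn0 dimvS ?subvf.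
  have := H k kN => neq.
  have lt : (\dim (limg (pw f k.+1)) < \dim (limg (pw f k)))%N.
    have := dimv_leqif_eq (pw_dec f k); rewrite (negbTE neq) => /= [[le _]].
    rewrite ltn_neqAle le andbT; apply/negP => /eqP E.
    move: neq; rewrite eqEdim pw_dec /= E leqnn //.
  have := IH (ltnW kN); rewrite addnS; lia.
have := D N.+1 (leqnn _); lia.
Qed.

Lemma fitting (K : fieldType) (V : vectType K) (f : 'End(V)) (x : V) :
  exists s, iter (\dim {:V}) f (x - iter (\dim {:V}) f s) = 0.
Proof.
have [k kN Hk] := pw_exists f.
set N := \dim {:V} in kN *.
have E1 : limg (pw f N) = limg (pw f k) by rewrite -(subnK kN) pw_stab.
have E2 : limg (pw f (N + N)) = limg (pw f k) .
  have EN : (N + N = (N + (N - k)) + k)%N by lia.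
  by rewrite EN pw_stab.
have : pw f N x \in limg (pw f (N + N)) by rewrite E2 -E1 memv_img ?memvf.
case/memv_imgP => s _ Hs; exists s.
by rewrite iter_lin -!pwE Hs !pwE -iterD subrr.
Qed.
End Fit.

Section Main.
Variables (K : numClosedFieldType) (H : vectType K)
    (mul : H -> H -> H) (one : H) (pair : H -> H -> K)
    (n : nat) (Hj : int -> {vspace H}) (c1 : H).
Hypothesis ax : qcoh_axioms mul one pair n Hj c1.

Lemma mulD a x y : mul a (x + y) = mul a x + mul a y.
Proof. by have := mul_linr ax 1 a x y; rewrite !scale1r. Qed.
Lemma mul0 a : mul a 0 = 0.
Proof. by apply/(addrI (mul a 0)); rewrite -mulD !addr0. Qed.
Lemma mulZ a k x : mul a (k *: x) = k *: mul a x.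
Proof. by have := mul_linr ax k a x 0; rewrite !addr0 mul0 addr0. Qed.
Lemma mulDl a x y : mul (x + y) a = mul x a + mul y a.
Proof. by have := mul_linl ax 1 x y a; rewrite !scale1r. Qed.
Lemma mul0l a : mul 0 a = 0.
Proof. by apply/(addrI (mul 0 a)); rewrite -mulDl !addr0. Qed.
Lemma mulZl a k x : mul (k *: x) a = k *: mul x a.
Proof. by have := mul_linl ax k x 0 a; rewrite !addr0 mul0l addr0. Qed.
Lemma mulB a x y : mul a (x - y) = mul a x - mul a y.
Proof. by rewrite -scaleN1r mulD mulZ scaleN1r. Qed.

Lemma pairD a x y : pair a (x + y) = pair a x + pair a y.
Proof. by have := pair_linr ax 1 a x y; rewrite !scale1r mul1r. Qed.
Lemma pair0 a : pair a 0 = 0.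
Proof. by apply/(addrI (pair a 0)); rewrite -pairD !addr0. Qed.
Lemma pairZ a k x : pair a (k *: x) = k * pair a x.
Proof. by have := pair_linr ax k a x 0; rewrite !addr0 pair0 addr0. Qed.
Lemma pairB a x y : pair a (x - y) = pair a x - pair a y.
Proof. by rewrite -scaleN1r pairD pairZ mulN1r. Qed.
Lemma pairDl a x y : pair (x + y) a = pair x a + pair y a.
Proof. by have := pair_linl ax 1 x y a; rewrite !scale1r mul1r. Qed.
Lemma pair0l a : pair 0 a = 0.
Proof. by apply/(addrI (pair 0 a)); rewrite -pairDl !addr0. Qed.
Lemma pairZl a k x : pair (k *: x) a = k * pair x a.
Proof. by have := pair_linl ax k x 0 a; rewrite !addr0 pair0l addr0. Qed.
Lemma pair_sum (I : finType) (P : pred I) a (F : I -> H) :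
  pair a (\sum_(i | P i) F i) = \sum_(i | P i) pair a (F i).
Proof.
elim/big_rec2: _ => [|i x y _ <-]; first by rewrite pair0.
by rewrite pairD.
Qed.
Lemma pair_one a b : pair a b = pair (mul a b) one.
Proof. by rewrite (pair_frob ax) (Defs.mul1r ax). Qed.

Lemma decomp b : exists2 bs : 'I_n.*2.+1 -> H,
  (forall i, bs i \in Hj (i%:Z - n%:Z)) & b = \sum_i bs i.
Proof.
have : b \in (\sum_(i < n.*2.+1) Hj (i%:Z - n%:Z))%VS by rewrite (Hj_sum ax) memvf.
by case/memv_sumP => bs Hbs ->; exists bs => // i; apply: Hbs.
Qed.

Lemma partner (j : int) v : v \in Hj j -> v != 0 ->
  exists2 w, w \in Hj (- j) & pair v w != 0.
Proof.
move=> vH vn0.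
have Hnot : ~ (forall w, w \in Hj (- j) -> pair v w = 0).
  move=> Hw; move/eqP: vn0; apply; apply: (pair_nondeg ax) => b.
  have [bs Hbs ->] := decomp b.
  rewrite pair_sum big1 // => i _.
  have [E|NE] := eqVneq (i%:Z - n%:Z) (- j).
    by apply: Hw; rewrite -E.
  apply: (pair_graded ax vH (Hbs i)).
  by apply: contra NE; rewrite addrC addr_eq0.
apply: NNPP => Hne; apply: Hnot => w wH.
by case: (eqVneq (pair v w) 0) => // Hp; exfalso; apply: Hne; exists w.
Qed.

Variable lam : K.
Definition T x := mul c1 x - lam *: x.

Lemma T_lin : linear T.
Proof.
move=> k x y; rewrite /T mulD mulZ scalerDr scalerBr scalerA mulrC -scalerA.
by rewrite addrACA opprD.
Qed.

Definition TLin : {linear H -> H} := HB.pack T (GRing.isLinear.Build K H H *:%R T T_lin).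
Definition TL : 'End(H) := linfun TLin.
Lemma TLE x : TL x = T x. Proof. exact: lfunE. Qed.
Lemma iterTL k x : iter k TL x = iter k T x.
Proof. by elim: k => //= k ->; rewrite TLE. Qed.

Lemma T_Hj k x : x \in Hj k -> T x \in Hj k.
Proof.
move=> xH; rewrite /T memvB ?memvZ //.
by have := mul_graded ax (c1_H0 ax) xH; rewrite add0r.
Qed.
Lemma iterT_Hj m k x : x \in Hj k -> iter m T x \in Hj k.
Proof. by move=> xH; elim: m => //= m IH; apply: T_Hj. Qed.

Lemma c1comm k x : x \in Hj k -> mul c1 x = mul x c1.
Proof.
by move=> xH; rewrite (mul_supercomm ax (c1_H0 ax) xH) /= mul0n expr0 scale1r.
Qed.

Lemma iterT0 m : iter m T 0 = 0.
Proof. by elim: m => //= m ->; rewrite /T mul0 scaler0 subr0. Qed.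

Definition pwr x m := iter m (mul x) one.

Lemma pwr_Hj j x m : x \in Hj j -> pwr x m \in Hj (j *+ m).
Proof.
move=> xH; elim: m => [|m IH]; first by rewrite mulr0n; exact: (one_H0 ax).
by rewrite mulrS; apply: (mul_graded ax xH IH).
Qed.

Lemma pwr_prod j k v w m : v \in Hj j -> w \in Hj k ->
  exists s : K, pwr (mul v w) m = s *: mul (pwr v m) (pwr w m).
Proof.
move=> vH wH; elim: m => [|m [s IH]].
  by exists 1; rewrite scale1r /= (Defs.mul1l ax).
rewrite /= IH mulZ -(Defs.mulA ax) (Defs.mulA ax w).
rewrite (mul_supercomm ax wH (pwr_Hj m vH)) mulZl mulZ -(Defs.mulA ax) (Defs.mulA ax v).
by rewrite scalerA; eexists.
Qed.

Lemma big_out (j : int) : j != 0 -> (n%:Z < `|j *+ n.+1|).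
Proof.
move=> jn0; have := normr_gt0 j; rewrite jn0 => h.
have h' : (1 <= `|j|)%R by [].
rewrite normrMn -mulr_natr.
nia.
Qed.

Lemma pwr_zero (j : int) v : j != 0 -> v \in Hj j -> pwr v n.+1 = 0.
Proof.
move=> jn0 vH; apply/eqP; rewrite -memv0 -(Hj_out ax (big_out jn0)).
exact: pwr_Hj.
Qed.

Lemma main_sec (hlam : mult_one_on (Hj 0) (mul c1) lam) :
  forall j : int, j != 0 -> ~ eigenvalue_on (Hj j) (mul c1) lam.
Proof.
move=> j jn0 [v [vH vn0 Ev]].
have [e [eH en0 egen emult]] := hlam.
have [w wH pvw] := partner vH vn0.
set u := mul v w.
have uH : u \in Hj 0 by have := mul_graded ax vH wH; rewrite addrN.
have pu1 : pair u one != 0 by rewrite -pair_one.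
have un0 : u != 0 by apply: contraNneq pu1 => ->; rewrite pair0l.
have Tu : T u = 0.
  by rewrite /T /u (Defs.mulA ax) Ev mulZl subrr.
have eig_u : forall x, x \in Hj 0 -> T x = 0 -> gen_eig_vec (mul c1) lam x.
  move=> x _ Tx; rewrite /gen_eig_vec.
  case E: (\dim _) => [|m].
    move/eqP: E; rewrite dimv_eq0 => /eqP E.
    by apply/eqP; rewrite -memv0 -E memvf.
  rewrite iterSr.
  change (iter m T (T x) = 0); rewrite Tx; exact: iterT0.
have mult_u : forall x, x \in Hj 0 -> gen_eig_vec (mul c1) lam x ->
    exists c : K, x = c *: u.
  move=> x xH gx.
  have [k Ek] := emult x xH gx.
  have [k' Ek'] := emult u uH (eig_u u uH Tu).
  have k'n0 : k' != 0 by apply: contraNneq un0 => k0; rewrite Ek' k0 scale0r.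
  exists (k / k'); by rewrite Ek Ek' scalerA mulrVK // unitfE.
have Eu : mul c1 u = lam *: u by apply/eqP; rewrite -subr_eq0; apply/eqP.
have uuH : mul u u \in Hj 0 by have := mul_graded ax uH uH; rewrite addr0.
have [al Eal] : exists al : K, mul u u = al *: u.
  apply: mult_u => //; apply: eig_u => //.
  by rewrite /T (Defs.mulA ax) Eu mulZl subrr.
have Epw : forall m, pwr u m.+1 = al ^+ m *: u.
  elim=> [|m IH]; first by rewrite /= (Defs.mul1r ax) expr0 scale1r.
  change (mul u (pwr u m.+1) = al ^+ m.+1 *: u).
  by rewrite IH mulZ Eal scalerA exprSr.
have pw0 : pwr u n.+1 = 0.
  have [s Es] := pwr_prod n.+1 vH wH.
  by rewrite /u Es (pwr_zero jn0 vH) mul0l scaler0.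
have al0 : al = 0.
  move: pw0; rewrite Epw => /eqP; rewrite scaler_eq0 (negbTE un0) orbF.
  by rewrite expf_eq0 => /andP[_ /eqP].
have puu : pair u u = 0 by rewrite pair_one Eal al0 scale0r pair0l.
have Nuu : forall y, pair u (T y) = 0.
  move=> y; rewrite /T pairB pairZ -(pair_frob ax) -(c1comm uH) Eu pairZl subrr //.
have [s Hs] := fitting TL one.
have Npos : (0 < \dim {:H})%N.
  rewrite lt0n dimv_eq0; apply: contra un0 => /eqP E.
  by rewrite -memv0 -E memvf.
set N := \dim {:H} in Hs Npos.
set g := one - iter N T s.
have pug : pair u g = pair u one.
  rewrite /g pairB; case: N Npos {Hs g} => // N' _.
  by rewrite iterS Nuu subr0.
have Tg : iter N T g = 0 by rewrite /g -iterTL -iterTL.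
have [gs gsH Eg] := decomp g.
have iter_sum : forall k, iter k TL (\sum_i gs i) = \sum_i iter k TL (gs i).
  elim=> [|k IH] /=; first by [].
  by rewrite IH linear_sum.
have gs0 : forall i, iter N T (gs i) = 0.
  move=> i; rewrite -iterTL.
  have := Hj_direct ax; move/directv_sum_independent => D.
  apply: (D (fun i => iter N TL (gs i))) => //.
    by move=> i' _; rewrite iterTL; apply: iterT_Hj.
  by rewrite -iter_sum -Eg iterTL.
have n_lt : (n < n.*2.+1)%N by rewrite ltnS -addnn leq_addr.
pose i0 := Ordinal n_lt.
have g0H : gs i0 \in Hj 0 by have := gsH i0; rewrite /= subrr.
have pug0 : pair u g = pair u (gs i0).
  rewrite Eg pair_sum (bigD1 i0) //= big1 ?addr0 // => i ni0.
  apply: (pair_graded ax uH (gsH i)); rewrite add0r subr_eq0.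
  by apply: contra ni0 => /eqP E; apply/eqP/val_inj => /=; case: E.
have [c Ec] := mult_u _ g0H (gs0 i0).
by move: pu1; rewrite -pug pug0 Ec pairZ puu mulr0 eqxx.
Qed.

End Main.

Theorem mainTheorem20 (K : numClosedFieldType) (H : vectType K)
    (mul : H -> H -> H) (one : H) (pair : H -> H -> K)
    (n : nat) (Hj : int -> {vspace H}) (c1 : H)
    (ax : qcoh_axioms mul one pair n Hj c1)
    (lam : K) (hlam : mult_one_on (Hj 0) (mul c1) lam) :
  forall j : int, j != 0 -> ~ eigenvalue_on (Hj j) (mul c1) lam.
Proof. exact: (main_sec ax hlam). Qed.
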